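(* Let $K=2m+1$ with $m\ge 3$ and suppose $t=KM/N=K-2$. Then the D2D coded caching rate $R=N/M-1$ is achievable with subpacketization $F=K(K-2)$.
   Context: D2D coded caching setting: there are $N\ge 1$ files $W_1,\dots,W_N$ and $K\ge 2$ users, each with a cache of size $M$ files, $0<M\le N$, and $t:=KM/N$ is assumed to be a positive integer. A D2D coded caching scheme with (uncoded placement and) subpacketization $F\in\mathbb{N}_+$ is defined as follows. Fix a packet size $b\ge 1$; each file is a sequence of $F$ packets $W_n=(W_n^{(1)},\dots,W_n^{(F)})$, $W_n^{(j)}\in\{0,1\}^b$. Placement: each user $k\in[K]$ stores the packets $\{W_n^{(j)}:(n,j)\in Z_k\}$ for a fixed index set $Z_k\subseteq[N]\times[F]$ with $|Z_k|\le MF$ (independent of demands and file contents). Delivery: for every demand vector $\mathbf d=(d_1,\dots,d_K)\in[N]^K$, each user $k$ broadcasts to all other users $\ell_k(\mathbf d)\in\mathbb{N}$ blocks in $\{0,1\}^b$, each a deterministic function of the packets stored by user $k$; it is required that for all file contents each user $k$ can recover all $F$ packets of $W_{d_k}$ from its stored packets and the blocks sent by the other users. The rate is $R=\max_{\mathbf d}\frac{1}{F}\sum_{k=1}^K\ell_k(\mathbf d)$ (transmitted bits normalized by the file size $Fb$). The rate $R$ is achievable with subpacketization $F$ if such a scheme with rate $R$ exists for every packet size $b\ge 1$. *)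

(* Defs.v *)
From mathcomp Require Import all_boot all_order all_algebra.
Set Implicit Arguments. Unset Strict Implicit. Unset Printing Implicit Defensive.
Import Order.TTheory GRing.Theory Num.Theory.

Definition bits (b : nat) := b.-tuple bool.

Definition files (N F b : nat) := 'I_N -> 'I_F -> bits b.

(* What a user with index set Z sees of the library: packet (n,j) if (n,j) \in Z. *)
Definition cache_view (N F b : nat) := {ffun 'I_N * 'I_F -> option (bits b)}.

Definition stored (N F b : nat) (Z : {set 'I_N * 'I_F}) (W : files N F b)
  : cache_view N F b :=
  [ffun p => if p \in Z then Some (W p.1 p.2) else None].

Definition demand (N K : nat) := {ffun 'I_K -> 'I_N}.

(* A D2D coded caching scheme with uncoded placement, subpacketization F,
   packet size b, cache size M (in files).
   - Z k : placement index set of user k, with |Z k| <= M F;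
   - len d k : number of blocks broadcast by user k under demand d;
   - enc d k : the blocks sent by user k, a function of its stored packets only;
   - dec d k : user k's decoder, a function of its stored packets and the
     blocks sent by the OTHER users (its own slot is blanked);
   - dec_ok : decoding recovers every packet of W_{d_k} for all file contents. *)
Record d2d_scheme (N K F b : nat) (M : rat) := D2DScheme {
  plc : 'I_K -> {set 'I_N * 'I_F};
  plc_size : forall k, (#|plc k|%:R <= M * F%:R :> rat)%R;
  len : demand N K -> 'I_K -> nat;
  enc : forall (d : demand N K) (k : 'I_K),
          cache_view N F b -> (len d k).-tuple (bits b);
  dec : demand N K -> 'I_K -> cache_view N F b ->
          ('I_K -> seq (bits b)) -> 'I_F -> bits b;
  dec_ok : forall (d : demand N K) (k : 'I_K) (W : files N F b) (j : 'I_F),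
    dec d k (stored (plc k) W)
        (fun i => if i == k then [::] else val (enc d i (stored (plc i) W))) j
    = W (d k) j
}.

Definition rate (N K F b : nat) (M : rat) (S : d2d_scheme N K F b M) : rat :=
  ((\max_(d : demand N K) \sum_(k < K) len S d k)%:R / F%:R)%R.

Definition achievable (N K : nat) (M : rat) (F : nat) (R : rat) : Prop :=
  forall b : nat, (1 <= b)%N -> exists S : d2d_scheme N K F b M, rate S = R.

(* Main.v *)
Require Import Defs.
From HB Require Import structures.
From mathcomp Require Import all_boot all_order all_algebra.
From mathcomp Require Import zify ring lra.
Set Implicit Arguments. Unset Strict Implicit. Unset Printing Implicit Defensive.
Import Order.TTheory GRing.Theory Num.Theory.

Definition zb b : bits b := [tuple false | _ < b].
Definition bxor b (x y : bits b) : bits b := [tuple addb (tnth x i) (tnth y i) | i < b].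
Lemma bxorA b : associative (@bxor b).
Proof. by move=> x y z; apply: eq_from_tnth => i; rewrite !tnth_mktuple addbA. Qed.
Lemma bxorC b : commutative (@bxor b).
Proof. by move=> x y; apply: eq_from_tnth => i; rewrite !tnth_mktuple addbC. Qed.
Lemma bxor0 b : left_id (zb b) (@bxor b).
Proof. by move=> x; apply: eq_from_tnth => i; rewrite !tnth_mktuple. Qed.
Lemma bxorK b (x y : bits b) : bxor (bxor x y) y = x.
Proof. by apply: eq_from_tnth => i; rewrite !tnth_mktuple addbK. Qed.
HB.instance Definition _ b := Monoid.isComLaw.Build (bits b) (zb b) (@bxor b) (@bxorA b) (@bxorC b) (@bxor0 b).
Lemma bigD1x b (I : finType) (i : I) (f : I -> bits b) :
  \big[@bxor b/zb b]_(j : I) f j = bxor (f i) (\big[@bxor b/zb b]_(j | j != i) f j).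
Proof. by rewrite (bigD1 i). Qed.
Section Cons.
Variables (N n b : nat).
Local Notation K := n.+3.
Local Notation F := (n.+3 * n.+1).
Local Notation U := 'I_n.+3.
Local Notation P := 'I_n.+1.

Lemma eF : #|{: U * P}| = F. Proof. by rewrite card_prod !card_ord. Qed.
Definition pk (p : U * P) : 'I_F := cast_ord eF (enum_rank p).
Definition unpk (j : 'I_F) : U * P := enum_val (cast_ord (esym eF) j).
Lemma pkK : cancel pk unpk.
Proof. by move=> p; rewrite /unpk /pk cast_ordK enum_rankK. Qed.
Lemma unpkK : cancel unpk pk.
Proof. by move=> j; rewrite /unpk /pk enum_valK cast_ordKV. Qed.

Definition R (i : P) : U := @Ordinal n.+3 i.+2 (ltn_ord i).

Lemma R_inj : injective R.
Proof. by move=> i j /(congr1 val) /= [] /val_inj. Qed.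

Local Open Scope ring_scope.
Lemma R_neq0 i : R i != 0.
Proof. by []. Qed.
Lemma R_neq1 i : R i != 1.
Proof. by apply/eqP => /(congr1 val) /=; rewrite modn_small. Qed.
Lemma one_neq0 : (1 : U) != 0.
Proof. by apply/eqP => /(congr1 val) /=; rewrite modn_small. Qed.

Lemma addr_neq (z x y : U) : x != y -> z + x != z + y.
Proof. by apply: contra => /eqP /addrI ->. Qed.
Lemma addr_neq0 (z x : U) : x != 0 -> z + x != z.
Proof. by move=> h; rewrite -{2}(addr0 z) addr_neq. Qed.

Definition mis (j : 'I_F) (u : U) := (u == (unpk j).1) || (u == (unpk j).1 + R (unpk j).2).
Definition good u : {set 'I_F} := [set j | ~~ mis j u].
Definition plc u : {set 'I_N * 'I_F} := setX setT (good u).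
Definition get (v : cache_view N F b) p := odflt (zb b) (v p).
Definition blA (d : demand N K) v (k : U) :=
  \big[@bxor b/zb b]_(i : P) get v (d (k - 1 + R i), pk (k - 1, i)).
Definition blB (d : demand N K) v (k : U) :=
  \big[@bxor b/zb b]_(i : P) get v (d (k + 1 - R i), pk (k + 1 - R i, i)).
Definition enc (d : demand N K) (k : U) (v : cache_view N F b) : 2.-tuple (bits b) :=
  [tuple blA d v k; blB d v k].
Definition dec (d : demand N K) (u : U) (v : cache_view N F b) (bl : U -> seq (bits b)) (j : 'I_F) :=
  let z := (unpk j).1 in let i := (unpk j).2 in
  if u == z + R i then
    bxor (nth (zb b) (bl (z + 1)) 0)
      (\big[@bxor b/zb b]_(i' | i' != i) get v (d (z + R i'), pk (z, i')))
  else if u == z then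
    bxor (nth (zb b) (bl (z + R i - 1)) 1)
      (\big[@bxor b/zb b]_(i' | i' != i) get v (d (z + R i - R i'), pk (z + R i - R i', i')))
  else get v (d u, j).

Lemma get_st u W p : ~~ mis p.2 u -> get (stored (plc u) W) p = W p.1 p.2.
Proof.
by case: p => p1 p2 /= h; rewrite /get /stored ffunE in_setX in_setT inE h.
Qed.

Lemma mis_pk z i u : mis (pk (z, i)) u = (u == z) || (u == z + R i).
Proof. by rewrite /mis pkK. Qed.

Lemma bigW u W (f : P -> 'I_N * 'I_F) (pr : pred P) :
  (forall i', pr i' -> ~~ mis (f i').2 u) ->
  \big[@bxor b/zb b]_(i' | pr i') get (stored (plc u) W) (f i') =
  \big[@bxor b/zb b]_(i' | pr i') W (f i').1 (f i').2.
Proof. by move=> h; apply: eq_bigr => i' /h; apply: get_st. Qed.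

Lemma dec_ok0 (d : demand N K) (u : U) (W : files N F b) (j : 'I_F) :
    dec d u (stored (plc u) W)
        (fun i => if i == u then [::] else val (enc d i (stored (plc i) W))) j
    = W (d u) j.
Proof.
rewrite -(unpkK j); case: (unpk j) => z i; rewrite /dec pkK /=.
have h1 : z + 1 != z + R i by rewrite addr_neq // eq_sym R_neq1.
have h2 : z + R i != z by rewrite addr_neq0 // R_neq0.
case: eqP => [hu|hu].
  rewrite -hu in h1; rewrite (negbTE h1) /= /blA addrK (bigD1x i).
  rewrite get_st ?mis_pk /=; last by rewrite negb_or addr_neq0 ?one_neq0 //= -hu.
  rewrite (bigW (u := z + 1)) ?(bigW (u := u)) /=.
  - by rewrite bxorK hu.
  - move=> i' hi'; rewrite mis_pk negb_or hu h2 /= addr_neq // (inj_eq R_inj) eq_sym //.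
  - move=> i' hi'; rewrite mis_pk negb_or addr_neq0 ?one_neq0 //= addr_neq // eq_sym R_neq1.
case: eqP => [hz|hz].
  subst u.
  have h3 : z + R i - 1 != z by rewrite -addrA addr_neq0 // subr_eq0 R_neq1.
  have h4 : z + R i - 1 != z + R i by rewrite addr_neq0 // oppr_eq0 one_neq0.
  rewrite (negbTE h3) /= /blB subrK (bigD1x i) addrK.
  rewrite get_st ?mis_pk /=; last first.
    by rewrite negb_or h3 h4.
  rewrite (bigW (u := z + R i - 1)) ?(bigW (u := z)) /=.
  - by rewrite bxorK.
  - move=> i' hi'; rewrite mis_pk negb_or subrK [z == z + R i]eq_sym h2 andbT.
    by rewrite eq_sym -addrA addr_neq0 // subr_eq0 (inj_eq R_inj) eq_sym.
  - move=> i' hi'; rewrite mis_pk negb_or subrK h4 andbT.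
    by rewrite addr_neq // (inj_eq oppr_inj) eq_sym R_neq1.
rewrite get_st //= mis_pk negb_or; apply/andP; split; apply/eqP => //.
Qed.

Lemma card_good u : (#|good u| <= n.+1 * n.+1)%N.
Proof.
set A1 := [set pk (u, i) | i : P].
set A2 := [set pk (u - R i, i) | i : P].
have c1 : #|A1| = n.+1.
  by rewrite card_imset ?card_ord // => i j /(can_inj pkK) [].
have c2 : #|A2| = n.+1.
  by rewrite card_imset ?card_ord // => i j /(can_inj pkK) [].
have dis : A1 :&: A2 = set0.
  apply/setP => j; rewrite !inE; apply/negP => /andP [/imsetP [i _ ->]].
  case/imsetP => i' _ /(can_inj pkK) [e _]; move: e; apply/eqP.
  by rewrite eq_sym addr_neq0 // oppr_eq0 R_neq0.
have sub : A1 :|: A2 \subset ~: good u.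
  apply/subsetP => j; rewrite !inE negbK => /orP [] /imsetP [i _ ->].
    by rewrite mis_pk eqxx.
  by rewrite mis_pk subrK eqxx orbT.
have := subset_leq_card sub; rewrite cardsU dis cards0 c1 c2.
have := cardsC (good u); rewrite card_ord.
move: #|good u| #|~: good u| => x y e1 e2; rewrite subn0 in e2; nia.
Qed.

Definition scheme (M : rat) (hM : forall u, (#|plc u|%:R <= M * F%:R :> rat)%R) :
  d2d_scheme N K F b M :=
  @D2DScheme N K F b M plc hM (fun _ _ => 2%N) enc dec dec_ok0.

Lemma card_plc u : (#|plc u| <= N * (n.+1 * n.+1))%N.
Proof. by rewrite /plc cardsX cardsT card_ord leq_mul2l card_good orbT. Qed.
End Cons.

Theorem mainTheorem6 (m N K : nat) (M : rat) :
  (3 <= m)%N -> (1 <= N)%N -> K = (2 * m + 1)%N ->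
  (0 < M)%R -> (M <= N%:R)%R ->
  (K%:R * M / N%:R = (K - 2)%:R :> rat)%R ->
  achievable N K M (K * (K - 2)) (N%:R / M - 1)%R.
Proof.
move=> hm hN -> hM0 _.
have eK : (2 * m + 1 = (2 * m - 2).+3)%N by lia.
have eK2 : ((2 * m - 2).+3 - 2 = (2 * m - 2).+1)%N by lia.
rewrite eK eK2; move: (2 * m - 2)%N => n hK.
have hN0 : (N%:R != 0 :> rat)%R by rewrite pnatr_eq0 -lt0n.
have hM : M = ((n.+1)%:R * N%:R / (n.+3)%:R)%R.
  rewrite -hK; field; rewrite hN0 andbT; apply/negbT/gt_eqF; have := ler0n rat n; lra.
have hsz : forall u, (#|@plc N n u|%:R <= M * (n.+3 * n.+1)%N%:R :> rat)%R.
  move=> u; have -> : (M * (n.+3 * n.+1)%N%:R = (N * (n.+1 * n.+1))%N%:R :> rat)%R.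
    rewrite hM !natrM; field; apply/negbT/gt_eqF; have := ler0n rat n; lra.
  by rewrite ler_nat card_plc.
move=> b hb; exists (scheme b hsz).
rewrite /rate /=.
have d0 : demand N n.+3 := [ffun _ => Ordinal hN].
have -> : (\max_(d : demand N n.+3) \sum_(k < n.+3) 2 = n.+3 * 2)%N.
  apply/eqP; rewrite eqn_leq; apply/andP; split.
    by apply/bigmax_leqP => d _; rewrite sum_nat_const card_ord.
  apply: leq_trans (leq_bigmax d0); by rewrite sum_nat_const card_ord.
rewrite hM; field; rewrite hN0 /=; have := ler0n rat n => h0.
by apply/andP; split; apply/negbT/gt_eqF; lra.
Qed.
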